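(* For every $\mathcal{L}_{\text{Ł}}^{\Box}$-formula $\varphi$: $\varphi$ is $\mathsf{K(Ł)}$-valid if and only if $\varphi^{*}$ is $\mathsf{K(A^c)}$-valid, where $^{*}$ is the translation defined in the context.
   Context: Formulas are built over a countably infinite set $\mathrm{Var}$ of variables. $\mathcal{L}_{\text{Ł}}^{\Box}$ has a binary connective $\supset$ and unary connectives $\sim$ and $\Box$. A $\mathsf{K(Ł)}$-model $\langle W,R,V\rangle$ consists of a nonempty set $W$, $R\subseteq W\times W$, and $V\colon\mathrm{Var}\times W\to[0,1]$ extended by $V(\sim\varphi,x)=1-V(\varphi,x)$, $V(\varphi\supset\psi,x)=\min(1,1-V(\varphi,x)+V(\psi,x))$, $V(\Box\varphi,x)=\inf_{[0,1]}\{V(\varphi,y):Rxy\}$ (infimum taken in $[0,1]$, so the empty infimum is $1$). A formula is $\mathsf{K(Ł)}$-valid if $V(\varphi,x)=1$ for all models and all $x$. The language $\mathcal{L}_{A^c}^{\Box}$ has binary $\wedge,\vee,\&,\to$, constants $\overline{0}$ and $c$, and unary $\Box$; $\neg\varphi:=\varphi\to\overline{0}$. A $\mathsf{K(A^c)}$-model $\langle W,R,V,c^{\mathfrak{M}}\rangle$ consists of a nonempty $W$, $R\subseteq W\times W$, a real $c^{\mathfrak{M}}$, and $V\colon\mathrm{Var}\times W\to[-r,r]$ for some real $r\ge0$, extended by: $\wedge$ as $\min$, $\vee$ as $\max$, $\&$ as $+$, $V(\varphi\to\psi,x)=V(\psi,x)-V(\varphi,x)$, $V(\overline{0},x)=0$,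 $V(c,x)=c^{\mathfrak{M}}$, $V(\Box\varphi,x)=\inf_{\mathbb{R}}\{V(\varphi,y):Rxy\}$ with the empty infimum equal to $0$. A formula is $\mathsf{K(A^c)}$-valid if $V(\varphi,x)\ge 0$ for all such models and all $x$. Let $\bot:=c\wedge\neg c$. The translation $^{*}$ from $\mathcal{L}_{\text{Ł}}^{\Box}$-formulas to $\mathcal{L}_{A^c}^{\Box}$-formulas is: $p^{*}=(p\wedge\overline{0})\vee\bot$ for $p\in\mathrm{Var}$, $(\sim\varphi)^{*}=\varphi^{*}\to\bot$, $(\varphi\supset\psi)^{*}=(\varphi^{*}\to\psi^{*})\wedge\overline{0}$, $(\Box\varphi)^{*}=\Box\varphi^{*}$. *)

(* Defs.v *)
From HB Require Import structures.
From mathcomp Require Import all_boot all_order all_algebra.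
From mathcomp Require Import boolp classical_sets reals.
From mathcomp Require Import Rstruct.
From Stdlib Require Import Reals.
Set Implicit Arguments. Unset Strict Implicit. Unset Printing Implicit Defensive.
Import Order.TTheory GRing.Theory Num.Theory.
Local Open Scope classical_set_scope.
Local Open Scope ring_scope.

Notation real := Rdefinitions.R.

Inductive fmL : Type :=
| LVar : nat -> fmL
| LNeg : fmL -> fmL
| LImp : fmL -> fmL -> fmL
| LBox : fmL -> fmL.

Inductive fmA : Type :=
| AVar  : nat -> fmA
| AMeet : fmA -> fmA -> fmA
| AJoin : fmA -> fmA -> fmA
| AFus  : fmA -> fmA -> fmA
| AImp  : fmA -> fmA -> fmA
| AZero : fmA
| AC    : fmA
| ABox  : fmA -> fmA.

Definition ANeg (a : fmA) : fmA := AImp a AZero.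
Definition ABot : fmA := AMeet AC (ANeg AC).

Fixpoint trans (f : fmL) : fmA :=
  match f with
  | LVar p => AJoin (AMeet (AVar p) AZero) ABot
  | LNeg g => AImp (trans g) ABot
  | LImp g h => AMeet (AImp (trans g) (trans h)) AZero
  | LBox g => ABox (trans g)
  end.

(* K(Ł) semantics.  Box: infimum in [0,1]; the empty infimum is 1.
   For a nonempty subset of [0,1] the infimum in [0,1] is the real infimum. *)
Fixpoint evalL (W : Type) (Rel : W -> W -> Prop) (V : nat -> W -> real)
    (f : fmL) (x : W) : real :=
  match f with
  | LVar p => V p x
  | LNeg g => 1 - evalL Rel V g x
  | LImp g h => Num.min 1 (1 - evalL Rel V g x + evalL Rel V h x)
  | LBox g =>
      if pselect (exists y, Rel x y)
      then inf [set evalL Rel V g y | y in [set y | Rel x y]]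
      else 1
  end.

Definition KL_model (W : Type) (Rel : W -> W -> Prop) (V : nat -> W -> real) : Prop :=
  inhabited W /\ forall p x, 0 <= V p x <= 1.

Definition KL_valid (f : fmL) : Prop :=
  forall (W : Type) (Rel : W -> W -> Prop) (V : nat -> W -> real),
    KL_model Rel V -> forall x : W, evalL Rel V f x = 1.

Fixpoint evalA (W : Type) (Rel : W -> W -> Prop) (V : nat -> W -> real)
    (c : real) (f : fmA) (x : W) : real :=
  match f with
  | AVar p => V p x
  | AMeet g h => Num.min (evalA Rel V c g x) (evalA Rel V c h x)
  | AJoin g h => Num.max (evalA Rel V c g x) (evalA Rel V c h x)
  | AFus g h => evalA Rel V c g x + evalA Rel V c h x
  | AImp g h => evalA Rel V c h x - evalA Rel V c g x
  | AZero => 0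
  | AC => c
  | ABox g =>
      if pselect (exists y, Rel x y)
      then inf [set evalA Rel V c g y | y in [set y | Rel x y]]
      else 0
  end.

Definition KA_model (W : Type) (Rel : W -> W -> Prop) (V : nat -> W -> real) : Prop :=
  inhabited W /\ exists r : real, 0 <= r /\ forall p x, - r <= V p x <= r.

Definition KA_valid (f : fmA) : Prop :=
  forall (W : Type) (Rel : W -> W -> Prop) (V : nat -> W -> real) (c : real),
    KA_model Rel V -> forall x : W, 0 <= evalA Rel V c f x.

(* Main.v *)
Require Import Defs.
From HB Require Import structures.
From mathcomp Require Import all_boot all_order all_algebra.
From mathcomp Require Import boolp classical_sets reals Rstruct.
From mathcomp Require Import ring lra.
Import Order.TTheory GRing.Theory Num.Theory.
Local Open Scope classical_set_scope.
Local Open Scope ring_scope.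

Lemma inf_aff (E : set real) (a : real) : E !=set0 -> (forall t, E t -> 0 <= t) ->
  0 <= a -> inf [set a * (t - 1) | t in E] = a * (inf E - 1).
Proof.
move=> [t0 Et0] Epos a0.
have hlE : has_lbound E by exists 0 => t /Epos.
have neT : [set a * (t - 1) | t in E] !=set0 by exists (a * (t0 - 1)); exists t0.
have hlT : has_lbound [set a * (t - 1) | t in E].
  exists (- a) => _ [t Et <-]; have := Epos t Et; nra.
have infE0 : 0 <= inf E by apply: lb_le_inf; [exists t0 | move=> t /Epos].
apply/eqP; rewrite eq_le; apply/andP; split; last first.
  apply: lb_le_inf => // _ [t Et <-].
  have := ge_inf hlE Et; nra.
have [->|ap] := eqVneq a 0.
  rewrite mul0r; have -> : inf [set 0 * (t - 1) | t in E] = inf [set (0:real)].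
    congr inf; apply/seteqP; split => [_ [t Et <-]|_ ->]; first by rewrite mul0r.
    by exists t0 => //; rewrite mul0r.
  by rewrite inf1.
have apos : 0 < a by rewrite lt_def ap a0.
have : inf [set a * (t - 1) | t in E] / a + 1 <= inf E.
  apply: lb_le_inf; first by exists t0.
  move=> t Et; have := ge_inf hlT (ex_intro2 _ _ t Et erefl).
  move=> h. rewrite -(@ler_pM2r _ a) // mulrDl mulfVK ?ap //; lra.
move=> h; rewrite -(@ler_pM2r _ (a^-1)) ?invr_gt0 //.
rewrite [a * _]mulrC mulfK ?ap //; lra.
Qed.

Lemma RminusE (x y : real) : Rdefinitions.Rminus x y = x - y.
Proof. by []. Qed.
Lemma IZR1 : Rdefinitions.IZR (BinNums.Zpos BinNums.xH) = (1 : real).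
Proof. by []. Qed.

Lemma IZR0 : Rdefinitions.IZR BinNums.Z0 = (0 : real).
Proof. by []. Qed.

Lemma min_cases (x y : real) : (Num.min x y = x /\ x <= y) \/ (Num.min x y = y /\ y < x).
Proof. rewrite minEle; have [h|h] := leP x y; by [left | right]. Qed.
Lemma max_cases (x y : real) : (Num.max x y = y /\ x <= y) \/ (Num.max x y = x /\ y < x).
Proof. rewrite maxEle; have [h|h] := leP x y; by [left | right]. Qed.

Lemma evalL_range W (Rel : W -> W -> Prop) V : (forall p x, 0 <= V p x <= 1) ->
  forall f x, 0 <= evalL Rel V f x <= 1.
Proof.
move=> HV; elim=> [p|g IH|g IHg h IHh|g IH] x; cbn [evalL evalA trans ABot ANeg]; rewrite ?RminusE ?IZR1 ?IZR0.
- exact: HV.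
- case/andP: (IH x) => ? ?; apply/andP; split; lra.
- case/andP: (IHg x) => ? ?; case/andP: (IHh x) => ? ?; apply/andP; split; [rewrite le_min; apply/andP; split; lra | by rewrite ge_min lexx].
- case: (pselect (exists y, Rel x y)) => [[y Ry]|nH]; last by rewrite ler01 lexx.
  have hl : has_lbound [set evalL Rel V g y | y in [set y | Rel x y]].
    by exists 0 => _ [z _ <-]; case/andP: (IH z).
  apply/andP; split.
    apply: lb_le_inf; first by exists (evalL Rel V g y), y.
    by move=> _ [z _ <-]; case/andP: (IH z).
  apply: le_trans (ge_inf hl (ex_intro2 _ _ y Ry erefl)) _.
  by case/andP: (IH y).
Qed.

Lemma transE W (Rel : W -> W -> Prop) V VL c a : 0 <= a -> Num.min c (- c) = - a ->
  (forall p x, 0 <= VL p x <= 1) ->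
  (forall p x, Num.max (Num.min (V p x) 0) (- a) = a * (VL p x - 1)) ->
  forall f x, evalA Rel V c (trans f) x = a * (evalL Rel VL f x - 1).
Proof.
move=> a0 hc HVL HV; elim=> [p|g IH|g IHg h IHh|g IH] x; cbn [evalL evalA trans ABot ANeg]; rewrite ?RminusE ?IZR1 ?IZR0.
- rewrite sub0r hc; exact: HV.
- rewrite IH /ABot /ANeg /= sub0r hc; ring.
- rewrite IHg IHh.
  have [[-> ?]|[-> ?]] := min_cases 1 (1 - evalL Rel VL g x + evalL Rel VL h x);
  have [[-> ?]|[-> ?]] := min_cases (a * (evalL Rel VL h x - 1) - a * (evalL Rel VL g x - 1)) 0; nra.
- case: (pselect (exists y, Rel x y)) => [[y Ry]|nH]; last by rewrite subrr mulr0.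
  cbn [is_left]; rewrite -inf_aff //; last first.
  + move=> t [z _ <-]; by case/andP: (@evalL_range W Rel VL HVL g z).
  + by exists (evalL Rel VL g y), y.
  rewrite image_comp; congr inf; apply: eq_imagel => z _ /=; exact: IH.
Qed.

Theorem proposition2p3 (f : fmL) : KL_valid f <-> KA_valid (trans f).
Proof.
split.
- move=> H W Rel V c [inhW [r [r0 Hr]]] x.
  have [c0|cn] := eqVneq c 0.
    have h1 : Num.min c (- c) = - 0 by rewrite c0 oppr0 minxx.
    have h2 : forall (p : nat) (y : W), 0 <= (fun _ _ => 1 : real) p y <= 1.
      by move=> p y; rewrite ler01 lexx.
    have h3 : forall p y, Num.max (Num.min (V p y) 0) (- 0) = 0 * ((fun _ _ => 1 : real) p y - 1).
      move=> p y; rewrite oppr0 mul0r; apply/eqP; rewrite eq_le; apply/andP; split.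
        by rewrite ge_max ge_min !lexx orbT.
      by rewrite le_max lexx orbT.
    by rewrite (@transE W Rel V (fun _ _ => 1) c 0 (lexx 0) h1 h2 h3) mul0r.
  have ca : 0 < `|c| by rewrite normr_gt0.
  set VL := fun p y => (Num.max (Num.min (V p y) 0) (- `|c|) + `|c|) / `|c|.
  have HVL : forall p y, 0 <= VL p y <= 1.
    move=> p y; rewrite /VL; apply/andP; split.
      apply: divr_ge0; last lra.
      have [[-> ?]|[-> ?]] := min_cases (V p y) 0;
      [have [[-> ?]|[-> ?]] := max_cases (V p y) (- `|c|) | have [[-> ?]|[-> ?]] := max_cases 0 (- `|c|)]; lra.
    rewrite ler_pdivrMr // mul1r.
    have [[-> ?]|[-> ?]] := min_cases (V p y) 0;
    [have [[-> ?]|[-> ?]] := max_cases (V p y) (- `|c|) | have [[-> ?]|[-> ?]] := max_cases 0 (- `|c|)]; lra.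
  have h1 : Num.min c (- c) = - `|c|.
    case: (lerP 0 c) => h; [rewrite ger0_norm // | rewrite ltr0_norm // opprK];
    have [[-> ?]|[-> ?]] := min_cases c (- c); lra.
  have h3 : forall p y, Num.max (Num.min (V p y) 0) (- `|c|) = `|c| * (VL p y - 1).
    move=> p y; rewrite /VL mulrC mulrBl divfK ?mul1r; [lra | by rewrite normr_eq0].
  rewrite (@transE W Rel V VL c `|c| (ltW ca) h1 HVL h3).
  by rewrite (H W Rel VL) ?subrr ?mulr0.
- move=> H W Rel VL [inhW HVL] x.
  have hm : KA_model Rel (fun p y => VL p y - 1).
    split => //; exists 1; split => // p y; case/andP: (HVL p y) => ? ?; apply/andP; split; lra.
  have h1 : Num.min 1 (- 1) = - (1 : real).
    have [[-> ?]|[-> ?]] := min_cases 1 (- 1); lra.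
  have h3 : forall p y, Num.max (Num.min (VL p y - 1) 0) (- 1) = 1 * (VL p y - 1).
    move=> p y; case/andP: (HVL p y) => ? ?; rewrite mul1r.
    have [[-> ?]|[-> ?]] := min_cases (VL p y - 1) 0;
    [have [[-> ?]|[-> ?]] := max_cases (VL p y - 1) (- 1) | have [[-> ?]|[-> ?]] := max_cases 0 (- 1)]; lra.
  have := H W Rel (fun p y => VL p y - 1) 1 hm x.
  rewrite (@transE W Rel (fun p y => VL p y - 1) VL 1 1 ler01 h1 HVL h3).
  case/andP: (@evalL_range W Rel VL HVL f x) => ? ? ?.
  apply/eqP; rewrite eq_le; apply/andP; split; lra.
Qed.
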